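(* Let $(a_n)_{n\ge0}$ be the sequence defined by \[ \sum_{n=0}^{\infty}a_nz^n=\frac{1+36z+\sqrt{(1-12z)^3}}{2(1+4z)^2} \] (the sequence $1,1,3,14,83,570,\dots$, OEIS A220910). Then for all $n\ge2$, \[ n a_n=(8n-34)a_{n-1}+24(2n-3)a_{n-2}. \]
   Context: The square root is the branch analytic near $z=0$ with value $1$ at $z=0$. *)

(* Defs.v *)
From Stdlib Require Import Reals.
From Coquelicot Require Import Coquelicot.
Open Scope R_scope.

(* For real z near 0, (1-12z)^3 > 0 and Stdlib's sqrt is the nonnegative
   root, i.e. the branch analytic near 0 with value 1 at 0. *)
Definition gf (z : R) : R :=
  (1 + 36 * z + sqrt ((1 - 12 * z) ^ 3)) / (2 * (1 + 4 * z) ^ 2).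

Definition is_gf_coeffs (a : nat -> R) : Prop :=
  exists r : R, 0 < r /\
    forall z : R, Rabs z < r -> is_pseries a z (gf z).

(* Main.v *)
Require Import Defs.
From Stdlib Require Import Reals Lra Lia.
From Coquelicot Require Import Coquelicot.
Open Scope R_scope.

Lemma rad (a : nat -> R) (r : R) : 0 < r ->
  (forall z, Rabs z < r -> ex_pseries a z) -> Rbar_le (r/2) (CV_radius a).
Proof.
  intros Hr H.
  destruct (CV_radius_bounded a) as [Hub _].
  apply Hub.
  assert (Hx : Rabs (r/2) < r) by (rewrite Rabs_pos_eq; lra).
  destruct (H _ Hx) as [l Hl].
  assert (Hs : ex_series (fun k => scal (pow_n (r/2) k) (a k))) by (exists l; exact Hl).
  apply ex_series_lim_0 in Hs.
  destruct (filterlim_bounded (fun k => scal (pow_n (r/2) k) (a k))) as [M HM].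
  { exists 0. exact Hs. }
  exists M. intro n. specialize (HM n).
  rewrite Rmult_comm. rewrite <- pow_n_pow. exact HM.
Qed.

Lemma zero_series (x : R) : is_pseries (fun n : nat => match n with O => 27 | S _ => 0 end) x 27.
Proof.
  apply is_series_decr_1.
  assert (H : is_series (fun _ : nat => 0) 0).
  { intro P. intros [eps He]. exists O. intros n _. apply He.
    rewrite sum_n_const. simpl. rewrite Rmult_0_r. apply ball_center. }
  match goal with |- is_series _ ?l => replace l with 0 end.
  2:{ simpl. unfold scal; simpl. unfold mult, one, plus, opp; simpl. unfold mult; simpl. ring. }
  eapply is_series_ext; [|exact H].
  intro n. simpl. unfold scal; simpl; unfold mult; simpl. ring.
Qed.

Definition gfd (z : R) : R :=
  (36 - 18 * sqrt ((1 - 12 * z) ^ 3) / (1 - 12 * z)) / (2 * (1 + 4 * z) ^ 2)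
  - (1 + 36 * z + sqrt ((1 - 12 * z) ^ 3)) * (16 * (1 + 4 * z)) / (2 * (1 + 4 * z) ^ 2) ^ 2.

Lemma gf_deriv z : -1/24 < z < 1/24 -> is_derive gf z (gfd z).
Proof.
  intros Hz. unfold gf.
  assert (H1 : 0 < 1 - 12 * z) by lra.
  assert (H2 : 0 < 1 + 4 * z) by lra.
  assert (H3 : 0 < (1 - 12 * z) ^ 3) by (apply pow_lt; lra).
  assert (HS : 0 < sqrt ((1 - 12 * z) ^ 3)) by (apply sqrt_lt_R0; lra).
  auto_derive.
  - repeat split; try lra; nra.
  - unfold gfd.
    assert (HSS : sqrt ((1 - 12 * z) ^ 3) * sqrt ((1 - 12 * z) ^ 3) = (1 - 12 * z) ^ 3) by (apply sqrt_sqrt; lra).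
    replace ((1 + - (12 * z)) * ((1 + - (12 * z)) * ((1 + - (12 * z)) * 1))) with ((1 - 12 * z) ^ 3) by ring.
    set (S := sqrt ((1 - 12 * z) ^ 3)) in *.
    field_simplify_eq; [| repeat split; lra || nra].
    replace (S ^ 2) with ((1 - 12 * z) ^ 3) by (rewrite <- HSS; ring).
    ring.
Qed.

Lemma ode z : -1/24 < z < 1/24 -> (1 - 8*z - 48*z^2) * gfd z + (26 - 24*z) * gf z = 27.
Proof.
  intros Hz. unfold gfd, gf.
  assert (H1 : 0 < 1 - 12 * z) by lra.
  assert (H2 : 0 < 1 + 4 * z) by lra.
  field. lra.
Qed.

Lemma ball_R (z eps t : R) : ball z eps t -> Rabs (t - z) < eps.
Proof. intro H. exact H. Qed.

Lemma loc_ball (z rho : R) (P : R -> Prop) : Rabs z < rho ->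
  (forall t, Rabs t < rho -> P t) -> locally z P.
Proof.
  intros Hz HP.
  assert (He : 0 < rho - Rabs z) by lra.
  exists (mkposreal _ He). intros t Ht. apply ball_R in Ht. simpl in Ht.
  apply HP. pose proof (Rabs_triang_inv t z). pose proof (Rabs_triang_inv z t).
  rewrite Rabs_minus_sym in H0. lra.
Qed.

Theorem mainTheorem7 (a : nat -> R) :
  is_gf_coeffs a ->
  forall n : nat, (2 <= n)%nat ->
    INR n * a n = (8 * INR n - 34) * a (n - 1)%nat
                  + 24 * (2 * INR n - 3) * a (n - 2)%nat.
Proof.
  intros [r [Hr Hg]] n Hn.
  set (rho := Rmin (r/2) (1/24)).
  assert (Hrho : 0 < rho) by (unfold rho; apply Rmin_glb_lt; lra).
  assert (Hrho1 : rho <= r/2) by apply Rmin_l.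
  assert (Hrho2 : rho <= 1/24) by apply Rmin_r.
  assert (HR : Rbar_le (r/2) (CV_radius a)).
  { apply rad; auto. intros z Hz. eexists. apply Hg. exact Hz. }
  assert (Hin : forall z, Rabs z < rho -> Rbar_lt (Rabs z) (CV_radius a)).
  { intros z Hz. eapply Rbar_lt_le_trans; [|exact HR]. simpl. lra. }
  assert (Heq : forall z, Rabs z < rho -> PSeries a z = gf z).
  { intros z Hz. apply is_pseries_unique. apply Hg. lra. }
  assert (Hder : forall z, Rabs z < rho -> PSeries (PS_derive a) z = gfd z).
  { intros z Hz.
    assert (Hz' : -1/24 < z < 1/24) by (apply Rabs_def2 in Hz; lra).
    rewrite <- (is_derive_unique _ _ _ (is_derive_PSeries a z (Hin z Hz))).
    apply is_derive_unique.
    apply (is_derive_ext_loc gf).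
    - apply (loc_ball z rho); auto. intros t Ht. symmetry. apply Heq. exact Ht.
    - apply gf_deriv. exact Hz'. }
  set (b := PS_derive a).
  set (c := PS_plus (PS_plus (PS_plus (PS_plus b (PS_scal (-8) (PS_incr_1 b)))
              (PS_scal (-48) (PS_incr_1 (PS_incr_1 b)))) (PS_scal 26 a))
              (PS_scal (-24) (PS_incr_1 a))).
  assert (Hc : forall z, Rabs z < rho -> is_pseries c z 27).
  { intros z Hz.
    assert (Hz' : -1/24 < z < 1/24) by (apply Rabs_def2 in Hz; lra).
    assert (Ha : is_pseries a z (PSeries a z)) by (apply PSeries_correct, CV_radius_inside, Hin, Hz).
    assert (Hb : is_pseries b z (PSeries b z)) by (apply PSeries_correct, ex_pseries_derive, Hin, Hz).
    set (La := PSeries a z) in *. set (Lb := PSeries b z) in *.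
    replace 27 with (plus (plus (plus (plus Lb (scal (-8) (scal z Lb))) (scal (-48) (scal z (scal z Lb)))) (scal 26 La)) (scal (-24) (scal z La))).
    2:{ unfold La, Lb, b. rewrite Heq, Hder by exact Hz.
        rewrite <- (ode z Hz'). unfold plus, scal; simpl. unfold mult; simpl. ring. }
    assert (Hm : forall k : R, mult z k = mult k z) by (intro k; unfold mult; simpl; ring).
    pose proof (is_pseries_incr_1 b z Lb Hb) as Hb1.
    pose proof (is_pseries_incr_1 _ z _ Hb1) as Hb2.
    pose proof (is_pseries_incr_1 a z La Ha) as Ha1.
    pose proof (is_pseries_scal (-8) _ z _ (Hm _) Hb1) as T1.
    pose proof (is_pseries_scal (-48) _ z _ (Hm _) Hb2) as T2.
    pose proof (is_pseries_scal 26 _ z _ (Hm _) Ha) as T3.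
    pose proof (is_pseries_scal (-24) _ z _ (Hm _) Ha1) as T4.
    pose proof (is_pseries_plus _ _ _ _ _ Hb T1) as U1.
    pose proof (is_pseries_plus _ _ _ _ _ U1 T2) as U2.
    pose proof (is_pseries_plus _ _ _ _ _ U2 T3) as U3.
    pose proof (is_pseries_plus _ _ _ _ _ U3 T4) as U4.
    exact U4. }
  set (d := fun n : nat => match n with O => 27 | S _ => 0 end).
  assert (Hcd : c (n - 1)%nat = d (n - 1)%nat).
  { apply PSeries_ext_recip.
    - eapply Rbar_lt_le_trans; [| apply (rad c rho Hrho)].
      + simpl. lra.
      + intros z Hz. eexists. apply Hc. exact Hz.
    - eapply Rbar_lt_le_trans; [| apply (rad d rho Hrho)].
      + simpl. lra.
      + intros z Hz. eexists. apply zero_series.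
    - apply (loc_ball 0 rho). rewrite Rabs_R0. exact Hrho.
      intros t Ht. rewrite (is_pseries_unique _ _ _ (Hc t Ht)).
      rewrite (is_pseries_unique d t 27 (zero_series t)). reflexivity. }
  destruct n as [|[|k]]; try lia.
  replace (S (S k) - 1)%nat with (S k) by lia.
  replace (S (S k) - 2)%nat with k by lia.
  replace (S (S k) - 1)%nat with (S k) in Hcd by lia.
  unfold c, b, PS_plus, PS_scal, PS_incr_1, PS_derive, plus, scal, mult, zero in Hcd.
  destruct k as [|j]; cbn -[INR] in Hcd; rewrite ?S_INR in *; simpl in *; lra.
Qed.
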